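(* Let $I=\{1,2\}$, $A=\{x,y,z\}$ with $x,y,z$ pairwise distinct, and let $\mathcal C=\mathcal C(I,A,(\rho_i)_{i\in I},(C^a)_{a\in A})$ be a Cartan scheme with $\rho_1(x)=y$, $\rho_1(y)=x$, $\rho_1(z)=z$, $\rho_2(x)=x$, $\rho_2(y)=z$, $\rho_2(z)=y$. Let $a,b,c,d\in\mathbb N_0$ with $a\le d$ such that $C^x=\begin{pmatrix}2&-a\\-c&2\end{pmatrix}$, $C^y=\begin{pmatrix}2&-a\\-d&2\end{pmatrix}$, $C^z=\begin{pmatrix}2&-b\\-d&2\end{pmatrix}$, and let $\mathcal R=\mathcal R(\mathcal C,(R^a)_{a\in A})$ be a root system of type $\mathcal C$. If $\mathcal R$ is finite, then $(a,b,c,d)$ and $R^x$ satisfy one of: (1) $(a,b,c,d)=(1,1,1,1)$, $|R^x_+|=3$; (2) $(1,1,3,3)$, $|R^x_+|=6$; (3) $(1,2,4,2)$, $|R^x_+|=6$; (4) $(1,3,6,2)$, $|R^x_+|=12$; (5) $(1,4,5,2)$, $|R^x_+|=12$; (6) $(1,3,7,2)$, $|R^x_+|=18$; (7) $(1,5,5,2)$, $|R^x_+|=18$. Conversely, if $(a,b,c,d)$ is one of these seven quadruples, then $\mathcal R$ is finite.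
   Context: Let $I$ be a nonempty finite set and $\{\alpha_i\mid i\in I\}$ the standard basis of $\mathbb Z^I$; $\mathbb N_0=\{0,1,2,\dots\}$. A generalized Cartan matrix is $C=(c_{ij})_{i,j\in I}\in\mathbb Z^{I\times I}$ with $c_{ii}=2$, $c_{jk}\le0$ for $j\ne k$, and $c_{ij}=0\Rightarrow c_{ji}=0$. A Cartan scheme $\mathcal C=\mathcal C(I,A,(\rho_i)_{i\in I},(C^a)_{a\in A})$ consists of a nonempty set $A$, maps $\rho_i:A\to A$ and generalized Cartan matrices $C^a=(c^a_{jk})_{j,k\in I}$ such that (C1) $\rho_i^2=\mathrm{id}$ and (C2) $c^a_{ij}=c^{\rho_i(a)}_{ij}$ for all $a\in A$, $i,j\in I$. For $i\in I$, $a\in A$ let $\sigma_i^a\in\mathrm{Aut}(\mathbb Z^I)$, $\sigma_i^a(\alpha_j)=\alpha_j-c^a_{ij}\alpha_i$. A root system of type $\mathcal C$ is a family $\mathcal R=\mathcal R(\mathcal C,(R^a)_{a\in A})$ of subsets $R^a\subset\mathbb Z^I$ such that, writing $R^a_+=R^a\cap\mathbb N_0^I$ and $m^a_{i,j}=|R^a\cap(\mathbb N_0\alpha_i+\mathbb N_0\alpha_j)|$, for all $a\in A$, $i,j\in I$: (R1) $R^a=R^a_+\cup(-R^a_+)$; (R2) $R^a\cap\mathbb Z\alpha_i=\{\alpha_i,-\alpha_i\}$; (R3) $\sigma_i^a(R^a)=R^{\rho_i(a)}$; (R4) if $i\neq j$ and $m^a_{i,j}$ is finite then $(\rho_i\rho_j)^{m^a_{i,j}}(a)=a$.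 It is finite if every $R^a$ is finite. *)

(* Defs.v *)
From mathcomp Require Import all_boot all_order all_algebra.
Set Implicit Arguments. Unset Strict Implicit. Unset Printing Implicit Defensive.
Import Order.TTheory GRing.Theory Num.Theory.
Local Open Scope ring_scope.

Section CartanDefs.
Variable I : finType.
Variable A : Type.

Definition vec := {ffun I -> int}.

Definition alpha (i : I) : vec := [ffun j => ((j == i) : nat)%:Z].

Definition vopp (v : vec) : vec := [ffun j => - v j].

Definition nonneg (v : vec) : Prop := forall j, 0 <= v j.

Definition gen_cartan (M : I -> I -> int) : Prop :=
  (forall i, M i i = 2) /\
  (forall j k, j != k -> M j k <= 0) /\
  (forall i j, M i j = 0 -> M j i = 0).

Definition cartan_scheme (rho : I -> A -> A) (C : A -> I -> I -> int) : Prop :=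
  (exists a : A, True) /\
  (forall a, gen_cartan (C a)) /\
  (forall i a, rho i (rho i a) = a) /\
  (forall a i j, C a i j = C (rho i a) i j).

(* sigma_i^a (alpha_j) = alpha_j - c^a_{ij} alpha_i, extended linearly *)
Definition sigma (C : A -> I -> I -> int) (a : A) (i : I) (v : vec) : vec :=
  [ffun k => v k - (if k == i then \sum_(j : I) C a i j * v j else 0)].

Definition card_is (P : vec -> Prop) (n : nat) : Prop :=
  exists s : seq vec, [/\ uniq s, (forall v, v \in s <-> P v) & size s = n].

Definition in_cone (i j : I) (v : vec) : Prop :=
  exists p q : nat, v = [ffun k => p%:Z * alpha i k + q%:Z * alpha j k].

Definition root_system (rho : I -> A -> A) (C : A -> I -> I -> int)
    (R : A -> vec -> Prop) : Prop :=
  (forall a v, R a v <-> ((R a v /\ nonneg v) \/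
                          (R a (vopp v) /\ nonneg (vopp v)))) /\
  (forall a i v, (exists k : int, v = [ffun l => k * alpha i l]) ->
       (R a v <-> (v = alpha i \/ v = vopp (alpha i)))) /\
  (forall a i v, R (rho i a) v <-> exists2 w, R a w & sigma C a i w = v) /\
  (forall a i j (m : nat), i != j ->
       card_is (fun v => R a v /\ in_cone i j v) m ->
       iter m (fun b => rho i (rho j b)) a = a).

Definition root_system_finite (R : A -> vec -> Prop) : Prop :=
  forall a, exists s : seq vec, forall v, R a v <-> v \in s.

End CartanDefs.

(* the 2x2 matrix [[2, -p], [-q, 2]] indexed by 'I_2 (index 0 = "1", 1 = "2") *)
Definition cm2 (p q : nat) : 'I_2 -> 'I_2 -> int :=
  fun i j => if i == j then 2%:Z
             else if val i == 0%N then - (p%:Z) else - (q%:Z).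

(* Main.v *)
Require Import Defs.
From mathcomp Require Import all_boot all_order all_algebra.
From mathcomp Require Import zify ring lra.
Set Implicit Arguments. Unset Strict Implicit. Unset Printing Implicit Defensive.
Import Order.TTheory GRing.Theory Num.Theory.
Local Open Scope ring_scope.

Definition mkv (p q : int) : {ffun 'I_2 -> int} := [ffun k : 'I_2 => if k == ord0 then p else q].

Lemma vecE (v : {ffun 'I_2 -> int}) : v = mkv (v ord0) (v ord_max).
Proof.
apply/ffunP => k; rewrite ffunE; case: k => [[|[|k]] Hk] //=.
- by congr (v _); apply: val_inj.
- by congr (v _); apply: val_inj.
Qed.

Lemma mkv0 p q : mkv p q ord0 = p. Proof. by rewrite ffunE. Qed.
Lemma mkv1 p q : mkv p q ord_max = q. Proof. by rewrite ffunE. Qed.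

Lemma mkv_inj p q p' q' : mkv p q = mkv p' q' -> p = p' /\ q = q'.
Proof. by move=> H; split; [rewrite -(mkv0 p q) H mkv0 | rewrite -(mkv1 p q) H mkv1]. Qed.

Lemma sum2 (F : 'I_2 -> int) : \sum_(j : 'I_2) F j = F ord0 + F ord_max.
Proof. rewrite big_ord_recl big_ord1; congr (_ + F _); exact: val_inj. Qed.

Inductive ob := OX | OY | OZ.
Definition ordb (i : bool) : 'I_2 := if i then ord_max else ord0.
Definition rh (i : bool) (o : ob) : ob :=
  match i, o with
  | false, OX => OY | false, OY => OX | false, OZ => OZ
  | true, OX => OX | true, OY => OZ | true, OZ => OY end.
Definition em (pa pb pc pd : nat) (o : ob) (i : bool) : int :=
  Posz (match o, i with
  | OX, false => pa | OX, true => pc | OY, false => pa | OY, true => pd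
  | OZ, false => pb | OZ, true => pd end).
Definition stp pa pb pc pd o (i : bool) (v : int * int) : int * int :=
  if i then (v.1, - v.2 + em pa pb pc pd o i * v.1)
  else (- v.1 + em pa pb pc pd o i * v.2, v.2).

Lemma rh_inv i o : rh i (rh i o) = o. Proof. by case: i; case: o. Qed.
Lemma em_rh pa pb pc pd i o : em pa pb pc pd (rh i o) i = em pa pb pc pd o i.
Proof. by case: i; case: o. Qed.
Lemma stp_inv pa pb pc pd o i v : stp pa pb pc pd o i (stp pa pb pc pd o i v) = v.
Proof. case: v => p q; case: i; rewrite /stp /=; congr pair; ring. Qed.
Lemma stp_rh pa pb pc pd o i v : stp pa pb pc pd (rh i o) i v = stp pa pb pc pd o i v.
Proof. by rewrite /stp em_rh. Qed.

Fixpoint fwd pa pb pc pd o i n v : int * int :=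
  if n is n'.+1 then fwd pa pb pc pd (rh i o) (~~ i) n' (stp pa pb pc pd o i v) else v.
Fixpoint fwdo o i n : ob := if n is n'.+1 then fwdo (rh i o) (~~ i) n' else o.
Definition alp (i : bool) : int * int := if i then (0, 1) else (1, 0).
Fixpoint cands pa pb pc pd o i n : seq (int * int) :=
  if n is n'.+1 then alp i :: map (stp pa pb pc pd o i) (cands pa pb pc pd (rh i o) (~~ i) n')
  else [::].
Definition lc (p q : int) (u w : int * int) := (p * u.1 + q * w.1, p * u.2 + q * w.2).

Lemma stp_lc pa pb pc pd o i p q u w :
  stp pa pb pc pd o i (lc p q u w) = lc p q (stp pa pb pc pd o i u) (stp pa pb pc pd o i w).
Proof. case: i; rewrite /stp /lc /=; congr pair; ring. Qed.

Lemma fwd_lc pa pb pc pd o i n p q u w :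
  fwd pa pb pc pd o i n (lc p q u w) = lc p q (fwd pa pb pc pd o i n u) (fwd pa pb pc pd o i n w).
Proof. elim: n o i u w => [|n IH] o i u w //=. by rewrite stp_lc IH. Qed.

Lemma lc_base (v : int * int) : v = lc v.1 v.2 (1, 0) (0, 1).
Proof. case: v => p q; rewrite /lc /=; congr pair; ring. Qed.

Definition negc pa pb pc pd o i n : bool :=
  let u := fwd pa pb pc pd o i n (1, 0) in let w := fwd pa pb pc pd o i n (0, 1) in
  [&& u.1 <= 0, u.2 <= 0, w.1 <= 0 & w.2 <= 0].

Definition P11 (A B Cc D : int) := A*A*B*Cc*D*D - 2*A*A*Cc*D - 2*A*B*Cc*D - A*B*D*D + 2*A*Cc + 2*A*D + B*Cc + B*D - 1.
Definition P22 (A B D : int) := - A*B*D*D + 2*A*D + B*D - 1.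

Lemma trE A B Cc D : P11 A B Cc D + P22 A B D =
  Cc * (A * ((A*D - 2) * (B*D - 2) - 2) + B) - 2 * ((A*D - 1) * (B*D - 2)) + 2.
Proof. rewrite /P11 /P22; ring. Qed.

Lemma grow_ok A B Cc D : 2 <= A * D -> 3 <= B * D -> 2 <= P11 A B Cc D + P22 A B D ->
  2 <= P11 A B Cc D /\ 2 <= P11 A B Cc D + P22 A B D.
Proof.
move=> h1 h2 h3; split => //.
have : P22 A B D <= 0.
  have -> : P22 A B D = - ((A*D - 1) * (B*D - 2)) + 1 by rewrite /P22; ring.
  move: (A * D) (B * D) h1 h2 => X Y *; nia.
move: h3; move: (P11 A B Cc D) (P22 A B D) => u v; lia.
Qed.

Lemma TR1 (A B Cc D : int) : 3 <= A -> A <= D -> 1 <= B -> 1 <= Cc ->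
  2 <= P11 A B Cc D + P22 A B D.
Proof.
move=> hA hD hB hC; rewrite trE.
have hX : 9 <= A * D by nia.
have hY : 3 <= B * D by nia.
have hX3 : 3 * A <= A * D by nia.
move: (A * D) (B * D) hX hY hX3 => X Y hX hY hX3.
have -> : (X - 1) * (Y - 2) = (X - 2) * (Y - 2) + (Y - 2) by ring.
have hW : 7 * (Y - 2) <= (X - 2) * (Y - 2) by nia.
have hW0 : 0 <= (X - 2) * (Y - 2) - 2 by nia.
move: ((X - 2) * (Y - 2)) hW hW0 => W hW hW0.
have hQ : 3 * (W - 2) <= A * (W - 2) by nia.
move: (A * (W - 2)) hQ => Q hQ.
have hC' : Q + B <= Cc * (Q + B) by nia.
lia.
Qed.

Lemma TR2a (A B Cc D : int) : A = 2 -> 2 <= B -> 2 <= D -> 2 <= Cc -> 2 <= P11 A B Cc D + P22 A B D.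
Proof.
move=> -> hB hD hC; rewrite trE.
have hY : 4 <= B * D by nia.
have hX : 2 * D - 2 >= 2 by lia.
have hW : 2 * (B * D - 2) <= (2 * D - 2) * (B * D - 2) by nia.
have -> : (2 * D - 1) * (B * D - 2) = (2 * D - 2) * (B * D - 2) + (B * D - 2) by ring.
move: (B * D) ((2 * D - 2) * (B * D - 2)) hY hW => Y W hY hW.
have hC' : 2 * (2 * (W - 2) + B) <= Cc * (2 * (W - 2) + B) by nia.
lia.
Qed.

Lemma TR2b (A B Cc D : int) : A = 2 -> B = 1 -> 3 <= D -> 2 <= Cc -> 2 <= P11 A B Cc D + P22 A B D.
Proof.
move=> -> -> hD hC; rewrite trE.
have hW : 4 * (D - 2) <= (2 * D - 2) * (1 * D - 2) by nia.
have -> : (2 * D - 1) * (1 * D - 2) = (2 * D - 2) * (1 * D - 2) + (D - 2) by ring.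
move: ((2 * D - 2) * (1 * D - 2)) hW => W hW.
have hC' : 2 * (2 * (W - 2) + 1) <= Cc * (2 * (W - 2) + 1) by nia.
lia.
Qed.

Lemma TR3 (A B Cc D : int) : A = 1 -> D = 2 -> 4 <= (B - 2) * (Cc - 4) -> 2 <= P11 A B Cc D + P22 A B D.
Proof.
move=> -> -> h; have -> : P11 1 B Cc 2 + P22 1 B 2 = (B - 2) * (Cc - 4) - 2 by rewrite trE; ring.
lia.
Qed.

Lemma TR4 (A B Cc D : int) : A = 1 -> D = 3 -> 2 <= B -> 4 <= Cc -> 2 <= P11 A B Cc D + P22 A B D.
Proof.
move=> -> -> h1 h2; have -> : P11 1 B Cc 3 + P22 1 B 3 = 4 * ((B - 1) * (Cc - 3)) - 2 by rewrite trE; ring.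
nia.
Qed.

Lemma TR5 (A B Cc D : int) : A = 1 -> D = 4 -> 1 <= B -> 3 <= Cc -> (2 <= B \/ 4 <= Cc) -> 2 <= P11 A B Cc D + P22 A B D.
Proof.
move=> -> -> h1 h2 h3; have -> : P11 1 B Cc 4 + P22 1 B 4 = Cc * (9 * B - 6) - 24 * B + 14 by rewrite trE; ring.
case: h3 => h3; nia.
Qed.

Lemma mulle {k c q : int} : k <= c -> 0 <= q -> k * q <= c * q.
Proof. move=> *; nia. Qed.

Lemma TR6 (A B Cc D : int) : A = 1 -> 1 <= B -> 5 <= D -> 3 <= Cc -> 2 <= P11 A B Cc D + P22 A B D.
Proof.
move=> -> h1 h2 h3; rewrite trE.
have hY : 5 <= B * D by nia.
have hW : 3 * (B * D - 2) <= (1 * D - 2) * (B * D - 2) by nia.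
have hQ : 0 <= 1 * ((1 * D - 2) * (B * D - 2) - 2) + B by nia.
have hC := mulle h3 hQ.
nia.
Qed.

Section Roots.
Variables (A : Type) (x y z : A) (rho : 'I_2 -> A -> A) (C : A -> 'I_2 -> 'I_2 -> int)
  (R : A -> {ffun 'I_2 -> int} -> Prop) (a b c d : nat).
Hypotheses (r0x : rho ord0 x = y) (r0y : rho ord0 y = x) (r0z : rho ord0 z = z)
  (r1x : rho ord_max x = x) (r1y : rho ord_max y = z) (r1z : rho ord_max z = y)
  (Cx : forall i j, C x i j = cm2 a c i j) (Cy : forall i j, C y i j = cm2 a d i j)
  (Cz : forall i j, C z i j = cm2 b d i j) (RS : root_system rho C R).

Definition E (o : ob) : A := match o with OX => x | OY => y | OZ => z end.
Definition Rp o (v : int * int) := R (E o) (mkv v.1 v.2).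

Lemma rhoE i o : rho (ordb i) (E o) = E (rh i o).
Proof. by case: i; case: o. Qed.

Lemma CE o i j : C (E o) (ordb i) (ordb j) =
   if i == j then 2 else - em a b c d o i.
Proof. by case: o; case: i; case: j; rewrite /= ?Cx ?Cy ?Cz. Qed.

Lemma sigmaE o i p q :
  sigma C (E o) (ordb i) (mkv p q) = mkv (stp a b c d o i (p, q)).1 (stp a b c d o i (p, q)).2.
Proof.
have E0 := CE o i false; have E1 := CE o i true.
apply/ffunP => k; rewrite !ffunE sum2 !ffunE.
case: i E0 E1 => /= -> ->; case: k => [[|[|k]] Hk] //=; ring.
Qed.

Lemma alphaE (i : bool) : alpha (ordb i) = mkv (alp i).1 (alp i).2.
Proof. by apply/ffunP => k; rewrite !ffunE; case: i; case: k => [[|[|k]] Hk]. Qed.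

Lemma R1 o v : R o v <-> ((R o v /\ nonneg v) \/ (R o (vopp v) /\ nonneg (vopp v))).
Proof. by case: RS => H _; apply: H. Qed.

Lemma stp_root o i v : Rp o v -> Rp (rh i o) (stp a b c d o i v).
Proof.
case: RS => _ [_ [H3 _]] Hv; rewrite /Rp -rhoE; apply/H3.
exists (mkv v.1 v.2) => //; case: v Hv => p q Hv; by rewrite sigmaE.
Qed.

Lemma stp_root_back o i v : Rp (rh i o) v -> Rp o (stp a b c d o i v).
Proof. move=> H; have := stp_root i H; by rewrite rh_inv stp_rh. Qed.

Lemma alp_root o i : Rp o (alp i).
Proof.
case: RS => _ [H2 _]; rewrite /Rp -alphaE; apply/(H2 _ (ordb i)); last by left.
exists 1; apply/ffunP => k; by rewrite !ffunE mul1r.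
Qed.

Lemma axis_root o (i : bool) (p : int) :
  Rp o (if i then (0, p) else (p, 0)) -> p = 1 \/ p = -1.
Proof.
case: RS => _ [H2 _] H.
have [] : mkv (if i then 0 else p) (if i then p else 0) = alpha (ordb i) \/
     mkv (if i then 0 else p) (if i then p else 0) = vopp (alpha (ordb i)).
  apply/(H2 (E o) (ordb i)); last by case: i H.
  exists p; apply/ffunP => k; rewrite !ffunE; case: i {H}; case: k => [[|[|k]] Hk] //=; ring.
- rewrite alphaE; case: i {H} => /= /mkv_inj [H1 H2']; by left.
- move=> H'; right; move: H'; rewrite alphaE; case: i {H} => /= /ffunP H';
   [move: (H' ord_max) | move: (H' ord0)]; rewrite !ffunE /= => ->; ring.
Qed.

Lemma zero_not_root o : ~ Rp o (0, 0).
Proof.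
move=> H; have := @axis_root o false 0 H; case=> /eqP; by [].
Qed.

Lemma sign_root o v : Rp o v -> (0 <= v.1 /\ 0 <= v.2) \/ (v.1 <= 0 /\ v.2 <= 0).
Proof.
move=> /R1 [[_ H]|[_ H]]; [left|right]; move: (H ord0) (H ord_max); rewrite /vopp !ffunE /=;
  [done|]; rewrite !oppr_ge0; done.
Qed.

Lemma neg_root o v : Rp o v -> Rp o (- v.1, - v.2).
Proof.
move=> H; rewrite /Rp /=.
have HV : vopp (mkv v.1 v.2) = mkv (- v.1) (- v.2).
  by apply/ffunP => k; rewrite !ffunE; case: (k == ord0).
have [[H1 H2]|[H1 H2]] := sign_root H.
- apply/R1; right; split.
  + have -> : vopp (mkv (- v.1) (- v.2)) = mkv v.1 v.2.
      by apply/ffunP => k; rewrite !ffunE; case: (k == ord0); rewrite opprK.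
    done.
  + by move=> k; rewrite /vopp !ffunE; case: (k == ord0); rewrite opprK.
- case: (boolP ((0 <= v.1) && (0 <= v.2))) => [/andP [G1 G2]|G].
  + have E1 : v.1 = 0 by lia. have E2 : v.2 = 0 by lia.
    by exfalso; apply: (@zero_not_root o); case: v H E1 E2 {H1 H2 G1 G2 HV} => p q H /= E1 E2; subst p q.
  + move: H; rewrite /Rp => /R1 [[_ Hn]|[Hr _]]; last by rewrite -HV.
    exfalso; move: G; by rewrite -(mkv0 v.1 v.2) -{2}(mkv1 v.1 v.2) !Hn.
Qed.


Lemma step_pos o i v : Rp o v -> 0 <= v.1 -> 0 <= v.2 -> v != alp i ->
  [/\ Rp (rh i o) (stp a b c d o i v), 0 <= (stp a b c d o i v).1 & 0 <= (stp a b c d o i v).2].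
Proof.
case: v => p q H Hp Hq Hne; rewrite /stp /=.
have Hs := stp_root i H; split => //.
- case: i Hne Hs => /= Hne Hs.
  + by [].
  + have Hq' : q != 0.
      apply/negP => /eqP Eq; subst q.
      have [E1|E1] := @axis_root o false p H; subst p; [by rewrite eqxx in Hne | by []].
    case: (sign_root Hs); rewrite /stp /= => -[]; set e := em _ _ _ _ _ _; move: Hq Hq'; clear; simpl; move=> *; lia.
- case: i Hne Hs => /= Hne Hs.
  + have Hp' : p != 0.
      apply/negP => /eqP Eq; subst p.
      have [E1|E1] := @axis_root o true q H; subst q; [by rewrite eqxx in Hne | by []].
    case: (sign_root Hs); rewrite /stp /= => -[]; set e := em _ _ _ _ _ _; move: Hp Hp'; clear; simpl; move=> *; lia.
  + by [].
Qed.

Lemma detL o i n v : Rp o v -> 0 <= v.1 -> 0 <= v.2 ->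
  v \in cands a b c d o i n \/
  [/\ 0 <= (fwd a b c d o i n v).1, 0 <= (fwd a b c d o i n v).2 & Rp (fwdo o i n) (fwd a b c d o i n v)].
Proof.
elim: n o i v => [|n IH] o i v H H1 H2 /=; first by right.
case: (boolP (v == alp i)) => [/eqP Ev|Hne]; first by left; rewrite Ev inE eqxx.
have [Hs Hs1 Hs2] := step_pos H H1 H2 Hne.
have [Hin|Hf] := IH (rh i o) (~~ i) _ Hs Hs1 Hs2; last by right.
left; rewrite inE; apply/orP; right.
by rewrite -[v](stp_inv a b c d o i); apply: map_f.
Qed.

Lemma fwd_root o i n v : Rp o v -> Rp (fwdo o i n) (fwd a b c d o i n v).
Proof. elim: n o i v => [|n IH] o i v H //=. apply: IH; exact: stp_root. Qed.

Lemma cands_root o i n v : v \in cands a b c d o i n -> Rp o v.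
Proof.
elim: n o i v => [|n IH] o i v //=; rewrite inE => /orP [/eqP ->|/mapP [w Hw ->]].
- exact: alp_root.
- apply: stp_root_back; exact: IH Hw.
Qed.

Lemma finL o i n : negc a b c d o i n -> forall v, Rp o v -> 0 <= v.1 -> 0 <= v.2 ->
  v \in cands a b c d o i n.
Proof.
move=> /and4P [N1 N2 N3 N4] v H H1 H2.
case: (detL i n H H1 H2) => // -[].
have -> : fwd a b c d o i n v = lc v.1 v.2 (fwd a b c d o i n (1, 0)) (fwd a b c d o i n (0, 1)).
  by rewrite {1}[v]lc_base fwd_lc.
move: N1 N2 N3 N4; rewrite /lc /=.
move: (fwd a b c d o i n (1, 0)) (fwd a b c d o i n (0, 1)) => u w N1 N2 N3 N4 G1 G2 G3.
have E1 : v.1 * u.1 + v.2 * w.1 = 0 by move: N1 N2 N3 N4 G1 G2 H1 H2; clear; move=> *; nia.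
have E2 : v.1 * u.2 + v.2 * w.2 = 0 by move: N1 N2 N3 N4 G1 G2 H1 H2; clear; move=> *; nia.
exfalso; apply: (@zero_not_root (fwdo o i n)).
have EE : (v.1 * u.1 + v.2 * w.1, v.1 * u.2 + v.2 * w.2) = (0, 0) by rewrite E1 E2.
by rewrite -EE.
Qed.

Definition tov (w : int * int) := mkv w.1 w.2.

Lemma RpE o v : R (E o) v <-> Rp o (v ord0, v ord_max).
Proof. by rewrite /Rp /= -vecE. Qed.

Lemma nonnegE (v : {ffun 'I_2 -> int}) : nonneg v <-> 0 <= v ord0 /\ 0 <= v ord_max.
Proof.
split; first by move=> H; split; apply: H.
move=> [H0 H1] k; case: k => [[|[|k]] Hk] //=.
- by rewrite (_ : Ordinal Hk = ord0) //; apply: val_inj.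
- by rewrite (_ : Ordinal Hk = ord_max) //; apply: val_inj.
Qed.

Lemma tov_inj : injective tov.
Proof. case=> p q [p' q'] /mkv_inj /= [-> ->] //. Qed.

Lemma fin_obj o i n : negc a b c d o i n ->
  exists s : seq {ffun 'I_2 -> int}, forall v, R (E o) v <-> v \in s.
Proof.
move=> Hn; set s := cands a b c d o i n.
exists (map tov (s ++ map (fun w => (- w.1, - w.2)) s)) => v; split.
- move=> /RpE H; apply/mapP; exists (v ord0, v ord_max); last exact: vecE.
  rewrite mem_cat; apply/orP; case: (sign_root H) => /= [[H1 H2]|[H1 H2]].
  + left; exact: finL.
  + right; apply/mapP; exists (- v ord0, - v ord_max); last by rewrite /= !opprK.
    apply: finL => //=; [exact: (neg_root H)| lia | lia].
- move=> /mapP [w]; rewrite mem_cat => /orP [Hw|/mapP [w' Hw' ->]] ->.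
  + exact: (cands_root Hw).
  + exact: neg_root (cands_root Hw').
Qed.

Definition nnb (w : int * int) := (0 <= w.1) && (0 <= w.2).

Lemma card_obj o i n : negc a b c d o i n -> all nnb (cands a b c d o i n) ->
  uniq (cands a b c d o i n) ->
  card_is (fun v => R (E o) v /\ nonneg v) (size (cands a b c d o i n)).
Proof.
move=> Hn Hall Hu; exists (map tov (cands a b c d o i n)); split.
- by rewrite map_inj_uniq //; exact: tov_inj.
- move=> v; split.
  + move=> /mapP [w Hw ->]; split; first exact: (cands_root Hw).
    move: (allP Hall _ Hw) => /andP [G1 G2]; apply/nonnegE; by rewrite mkv0 mkv1.
  + move=> [/RpE H /nonnegE [H1 H2]]; apply/mapP; exists (v ord0, v ord_max); last exact: vecE.
    exact: finL.
- by rewrite size_map.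
Qed.

Lemma in_coneE (v : {ffun 'I_2 -> int}) : in_cone ord0 ord_max v <-> nonneg v.
Proof.
split.
- move=> [p [q ->]] k; rewrite !ffunE; case: (k == ord0); case: (k == ord_max) => /=; lia.
- move=> /nonnegE [H0 H1]; exists `|v ord0|%N, `|v ord_max|%N.
  rewrite [LHS]vecE; apply/ffunP => k; rewrite !ffunE !gez0_abs //.
  by case: k => [[|[|k]] Hk] //=; ring.
Qed.

Lemma R4use o i n : negc a b c d o i n -> all nnb (cands a b c d o i n) ->
  uniq (cands a b c d o i n) ->
  iter (size (cands a b c d o i n)) (fun w => rho ord0 (rho ord_max w)) (E o) = E o.
Proof.
move=> Hn Hall Hu; case: RS => _ [_ [_ H4]]; apply: H4 => //.
have [s [Hs1 Hs2 Hs3]] := card_obj Hn Hall Hu.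
exists s; split => // v; rewrite Hs2; split; move=> [H1 H2]; split => //; by apply/in_coneE.
Qed.

Lemma mixed_contra o i k j :
  let w := fwd a b c d o i k (alp j) in (w.1 < 0 < w.2) || (w.2 < 0 < w.1) -> False.
Proof.
move=> w Hm; have := fwd_root i k (alp_root o j); rewrite -/w => /sign_root; lia.
Qed.


Definition det2 (u w : int * int) := u.1 * w.2 - u.2 * w.1.

Lemma fwd_det o i n u w :
  det2 (fwd a b c d o i n u) (fwd a b c d o i n w) = (-1) ^+ n * det2 u w.
Proof.
elim: n o i u w => [|n IH] o i u w /=; first by rewrite expr0 mul1r.
rewrite IH exprS /det2 /stp; case: i => /=; ring.
Qed.

Definition Mv v := fwd a b c d OX true 6 v.

Arguments Mv : simpl never.
Lemma Mv_lc v : Mv v = lc v.1 v.2 (Mv (1, 0)) (Mv (0, 1)).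
Proof. by rewrite /Mv {1}[v]lc_base fwd_lc. Qed.

Lemma Mv_CH v : let t := (Mv (1, 0)).1 + (Mv (0, 1)).2 in
  Mv (Mv v) = (t * (Mv v).1 - v.1, t * (Mv v).2 - v.2).
Proof.
have Hd : det2 (Mv (1, 0)) (Mv (0, 1)) = 1.
  by rewrite /Mv fwd_det /det2 /=; ring.
rewrite (Mv_lc (Mv v)) (Mv_lc v).
move: Hd; rewrite /det2 /lc; move: (Mv (1, 0)) (Mv (0, 1)) => [f11 f12] [f21 f22] /= Hd.
case: v => p q /=.
congr pair.
- rewrite -[X in _ - X]mulr1 -Hd; ring.
- rewrite -[X in _ - X]mulr1 -Hd; ring.
Qed.

Lemma growth : root_system_finite R -> 2 <= (Mv (1, 0)).1 ->
  2 <= (Mv (1, 0)).1 + (Mv (0, 1)).2 -> False.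
Proof.
move=> Hfin H1 H2; have [s Hs] := Hfin x.
set t := (Mv (1, 0)).1 + (Mv (0, 1)).2.
pose u j := iter j Mv (1, 0).
have Hroot : forall j, Rp OX (u j).
  elim=> [|j IH]; first exact: (alp_root OX false).
  by rewrite /u iterS; exact: (fwd_root true 6 IH).
have Hrec : forall j, (u j.+2).1 = t * (u j.+1).1 - (u j).1.
  by move=> j; rewrite /u !iterS Mv_CH.
have Hinc : forall j, 0 <= (u j).1 /\ (u j).1 + 1 <= (u j.+1).1.
  elim=> [|j [IH1 IH2]]; first by have -> : (u 1%N).1 = (Mv (1, 0)).1 by []; have -> : (u 0%N).1 = 1 by []; split; [done|move: H1; clear; move=> *; lia].
  rewrite Hrec; move: IH1 IH2 H2; rewrite -/t.
  move: (u j).1 (u j.+1).1 => p q; clear -t; move: t => r *; split; nia.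
have Hmono : forall j k, (j < k)%N -> (u j).1 < (u k).1.
  move=> j k; elim: k => [|k IH] //; rewrite ltnS leq_eqVlt => /orP [/eqP ->|Hjk].
  - have := Hinc k; lia.
  - have := IH Hjk; have := Hinc k; lia.
pose L := [seq tov (u j) | j <- iota 0 (size s).+1].
have HL : uniq L.
  rewrite map_inj_in_uniq ?iota_uniq // => j k _ _ /tov_inj Ejk.
  case: (ltngtP j k) => // Hjk; have := Hmono _ _ Hjk; rewrite Ejk; lia.
have Hsub : {subset L <= s}.
  move=> v /mapP [j _ ->]; apply/Hs; apply/(RpE OX); rewrite /tov mkv0 mkv1 -surjective_pairing.
  exact: Hroot.
have := uniq_leq_size HL Hsub; by rewrite size_map size_iota ltnn.
Qed.


Lemma fin_all n : negc a b c d OX false n -> negc a b c d OY false n -> negc a b c d OZ false n ->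
  (forall w, w = x \/ w = y \/ w = z) -> root_system_finite R.
Proof.
move=> HX HY HZ Hw w; case: (Hw w) => [->|[->|->]].
- exact: (fin_obj HX).
- exact: (fin_obj HY).
- exact: (fin_obj HZ).
Qed.

Lemma card_x n : negc a b c d OX false n -> all nnb (cands a b c d OX false n) ->
  uniq (cands a b c d OX false n) -> size (cands a b c d OX false n) = n ->
  card_is (fun v => R x v /\ nonneg v) n.
Proof. move=> H1 H2 H3 <-; exact: (card_obj H1 H2 H3). Qed.

Lemma M11E : (Mv (1, 0)).1 = P11 a b c d.
Proof. rewrite /Mv /P11 /= /stp /em /=; ring. Qed.

Lemma M22E : (Mv (0, 1)).2 = P22 a b d.
Proof. rewrite /Mv /P22 /= /stp /em /=; ring. Qed.

Lemma do_grow : root_system_finite R -> 2 <= a%:Z * d%:Z -> 3 <= b%:Z * d%:Z ->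
  2 <= P11 a b c d + P22 a b d -> False.
Proof.
move=> Hf h1 h2 h3; have [G1 G2] := grow_ok h1 h2 h3.
apply: (growth Hf); by rewrite ?M11E ?M22E.
Qed.




Definition goalF :=
  ((a, b, c, d) = (1, 1, 1, 1)%N /\ card_is (fun v => R x v /\ nonneg v) 3 \/
   (a, b, c, d) = (1, 1, 3, 3)%N /\ card_is (fun v => R x v /\ nonneg v) 6 \/
   (a, b, c, d) = (1, 2, 4, 2)%N /\ card_is (fun v => R x v /\ nonneg v) 6 \/
   (a, b, c, d) = (1, 3, 6, 2)%N /\ card_is (fun v => R x v /\ nonneg v) 12 \/
   (a, b, c, d) = (1, 4, 5, 2)%N /\ card_is (fun v => R x v /\ nonneg v) 12 \/
   (a, b, c, d) = (1, 3, 7, 2)%N /\ card_is (fun v => R x v /\ nonneg v) 18 \/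
   (a, b, c, d) = (1, 5, 5, 2)%N /\ card_is (fun v => R x v /\ nonneg v) 18).

Lemma main_fwd : root_system_finite R -> cartan_scheme rho C -> (a <= d)%N -> x <> y -> x <> z -> goalF.
Proof.
move=> Hf [_ [HG _]] had xy xz.
have Z : forall o (i : bool), em a b c d o i = 0 -> em a b c d o (~~ i) = 0 -> False -> False by [].
have sym : forall o (i : bool), em a b c d o i = 0 -> em a b c d o (~~ i) = 0.
  move=> o i H; have [_ [_ H3]] := HG (E o).
  have := H3 (ordb i) (ordb (~~ i)); rewrite !CE; case: i H => /= H;
    rewrite H oppr0 => /(_ erefl) /eqP; rewrite oppr_eq0 => /eqP; done.
have [Ha0|Ha1] : (a = 0 \/ 1 <= a)%N by lia.
  have Hc : c = 0%N by have := sym OX false; rewrite /em /= Ha0 => /(_ erefl) [].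
  have Hd : d = 0%N by have := sym OY false; rewrite /em /= Ha0 => /(_ erefl) [].
  have Hb : b = 0%N by have := sym OZ true; rewrite /em /= Hd => /(_ erefl) [].
  exfalso; have := @R4use OX false 2; rewrite Ha0 Hb Hc Hd => /(_ erefl erefl erefl).
  by rewrite /= r1x r0x r1y r0z => /esym.
have Hc1 : (1 <= c)%N.
  case: (posnP c) => // Hc; have := sym OX true; rewrite /em /= Hc => /(_ erefl) Hx.
  move: Hx Ha1; clear; lia.
have Hb1 : (1 <= b)%N.
  case: (posnP b) => // Hb; have := sym OZ false; rewrite /em /= Hb => /(_ erefl) Hx.
  move: Hx Ha1 had; clear; lia.
have [Ha3|[Ha2|Ha1']] : (3 <= a \/ a = 2 \/ a = 1)%N by lia.
- exfalso; apply: (do_grow Hf); [nia|nia|apply: TR1; lia].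
- have [Hc|Hc] : (c = 1 \/ 2 <= c)%N by lia.
  + exfalso; apply: (@mixed_contra OZ true 4 false); rewrite /= /stp /em /= Ha2 Hc; lia.
  + have [Hbd|Hbd] : ((b = 1 /\ d = 2) \/ (2 <= b /\ 2 <= d) \/ (b = 1 /\ 3 <= d))%N by lia.
    * case: Hbd => Hb Hd; exfalso; apply: (@mixed_contra OX false 4 true); rewrite /= /stp /em /=; rewrite Ha2 Hb Hd; lia.
    * exfalso; apply: (do_grow Hf); rewrite ?Ha2; [nia|nia|].
      case: Hbd => [[Hb Hd]|[Hb Hd]]; first (apply: TR2a; lia).
      apply: TR2b; lia.
- have Ha := Ha1'.
  have [Hc|Hc] : (c = 1 \/ 2 <= c)%N by lia.
  + have [Hd|Hd] : (d = 1 \/ 2 <= d)%N by lia.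
    * have [Hb|Hb] : (b = 1 \/ 2 <= b)%N by lia.
      -- left; split; [by rewrite Ha Hb Hc Hd | by apply: (@card_x 3); rewrite ?Ha ?Hb ?Hc ?Hd; vm_compute].
      -- exfalso; apply: (@mixed_contra OZ false 3 true); rewrite /= /stp /em /= ?Ha ?Hb ?Hc ?Hd; lia.
    * exfalso; apply: (@mixed_contra OZ true 3 false); rewrite /= /stp /em /= ?Ha ?Hb ?Hc ?Hd; lia.
  + have [Hd|Hd] : (d = 1 \/ 2 <= d)%N by lia.
    * exfalso; apply: (@mixed_contra OX true 3 false); rewrite /= /stp /em /= ?Ha ?Hb ?Hc ?Hd; lia.
    * have: (c = 2 \/ c = 3 \/ c = 4 \/ 5 <= c)%N by lia. clear Hc; case=> [Hc|[Hc|[Hc|Hc]]].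
      -- have: (d = 2 \/ 3 <= d)%N by lia. clear Hd; case=> [Hd|Hd].
         ++ have [Hb|Hb] : (b = 1 \/ 2 <= b)%N by lia.
            ** exfalso; have := @R4use OX false 4; rewrite Ha Hb Hc Hd => /(_ erefl erefl erefl).
               by rewrite /= r1x r0x r1y r0z r1z r0y r1x r0x => /esym.
            ** exfalso; apply: (@mixed_contra OZ false 4 true); rewrite /= /stp /em /= ?Ha ?Hb ?Hc ?Hd; lia.
         ++ exfalso; apply: (@mixed_contra OZ true 4 false); rewrite /= /stp /em /= ?Ha ?Hb ?Hc ?Hd; lia.
      -- have: (d = 2 \/ d = 3 \/ d = 4 \/ 5 <= d)%N by lia. clear Hd; case=> [Hd|[Hd|[Hd|Hd]]].
         ++ have [Hb|[Hb|Hb]] : (b = 1 \/ b = 2 \/ 3 <= b)%N by lia.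
            ** exfalso; apply: (@mixed_contra OX true 4 false); rewrite /= /stp /em /= ?Ha ?Hb ?Hc ?Hd; lia.
            ** exfalso; apply: (@mixed_contra OY true 5 false); rewrite /= /stp /em /= ?Ha ?Hb ?Hc ?Hd; lia.
            ** exfalso; apply: (@mixed_contra OZ false 5 true); rewrite /= /stp /em /= ?Ha ?Hb ?Hc ?Hd; lia.
         ++ have [Hb|Hb] : (b = 1 \/ 2 <= b)%N by lia.
            ** right; left; split; [by rewrite Ha Hb Hc Hd | by apply: (@card_x 6); rewrite ?Ha ?Hb ?Hc ?Hd; vm_compute].
            ** exfalso; apply: (@mixed_contra OZ false 6 true); rewrite /= /stp /em /= ?Ha ?Hb ?Hc ?Hd; lia.
         ++ have [Hb|Hb] : (b = 1 \/ 2 <= b)%N by lia.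
            ** exfalso; apply: (@mixed_contra OY true 8 false); rewrite /= /stp /em /= ?Ha ?Hb ?Hc ?Hd; lia.
            ** exfalso; apply: (do_grow Hf); [nia|nia|apply: TR5; lia].
         ++ exfalso; apply: (do_grow Hf); [nia|nia|apply: TR6; lia].
      -- have: (d = 2 \/ d = 3 \/ d = 4 \/ 5 <= d)%N by lia. clear Hd; case=> [Hd|[Hd|[Hd|Hd]]].
         ++ have [Hb|[Hb|Hb]] : (b = 1 \/ b = 2 \/ 3 <= b)%N by lia.
            ** exfalso; apply: (@mixed_contra OX true 4 false); rewrite /= /stp /em /= ?Ha ?Hb ?Hc ?Hd; lia.
            ** right; right; left; split; [by rewrite Ha Hb Hc Hd | by apply: (@card_x 6); rewrite ?Ha ?Hb ?Hc ?Hd; vm_compute].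
            ** exfalso; apply: (@mixed_contra OZ false 6 true); rewrite /= /stp /em /= ?Ha ?Hb ?Hc ?Hd; lia.
         ++ have [Hb|Hb] : (b = 1 \/ 2 <= b)%N by lia.
            ** exfalso; apply: (@mixed_contra OX true 6 false); rewrite /= /stp /em /= ?Ha ?Hb ?Hc ?Hd; lia.
            ** exfalso; apply: (do_grow Hf); [nia|nia|apply: TR4; lia].
         ++ exfalso; apply: (do_grow Hf); [nia|nia|apply: TR5; lia].
         ++ exfalso; apply: (do_grow Hf); [nia|nia|apply: TR6; lia].
      -- have: (d = 2 \/ d = 3 \/ d = 4 \/ 5 <= d)%N by lia. clear Hd; case=> [Hd|[Hd|[Hd|Hd]]].
         ++ have [Hb|[Hb|[Hb|[Hb|[Hb|Hb]]]]] : (b = 1 \/ b = 2 \/ b = 3 \/ b = 4 \/ b = 5 \/ 6 <= b)%N by lia.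
            ** exfalso; apply: (@mixed_contra OX true 4 false); rewrite /= /stp /em /= ?Ha ?Hb ?Hc ?Hd; lia.
            ** exfalso; apply: (@mixed_contra OX true 6 false); rewrite /= /stp /em /= ?Ha ?Hb ?Hc ?Hd; lia.
            ** have: (c = 5 \/ c = 6 \/ c = 7 \/ 8 <= c)%N by lia. clear Hc; case=> [Hc|[Hc|[Hc|Hc]]].
               --- exfalso; apply: (@mixed_contra OY true 8 false); rewrite /= /stp /em /= ?Ha ?Hb ?Hc ?Hd; lia.
               --- right; right; right; left; split; [by rewrite Ha Hb Hc Hd | by apply: (@card_x 12); rewrite ?Ha ?Hb ?Hc ?Hd; vm_compute].
               --- right; right; right; right; right; left; split; [by rewrite Ha Hb Hc Hd | by apply: (@card_x 18); rewrite ?Ha ?Hb ?Hc ?Hd; vm_compute].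
               --- exfalso; apply: (do_grow Hf); [nia|nia|apply: TR3; nia].
            ** have: (c = 5 \/ 6 <= c)%N by lia. clear Hc; case=> [Hc|Hc].
               --- right; right; right; right; left; split; [by rewrite Ha Hb Hc Hd | by apply: (@card_x 12); rewrite ?Ha ?Hb ?Hc ?Hd; vm_compute].
               --- exfalso; apply: (do_grow Hf); [nia|nia|apply: TR3; nia].
            ** have: (c = 5 \/ 6 <= c)%N by lia. clear Hc; case=> [Hc|Hc].
               --- right; right; right; right; right; right; split; [by rewrite Ha Hb Hc Hd | by apply: (@card_x 18); rewrite ?Ha ?Hb ?Hc ?Hd; vm_compute].
               --- exfalso; apply: (do_grow Hf); [nia|nia|apply: TR3; nia].
            ** exfalso; apply: (do_grow Hf); [nia|nia|apply: TR3; nia].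
         ++ have [Hb|Hb] : (b = 1 \/ 2 <= b)%N by lia.
            ** exfalso; apply: (@mixed_contra OX true 6 false); rewrite /= /stp /em /= ?Ha ?Hb ?Hc ?Hd; lia.
            ** exfalso; apply: (do_grow Hf); [nia|nia|apply: TR4; lia].
         ++ exfalso; apply: (do_grow Hf); [nia|nia|apply: TR5; lia].
         ++ exfalso; apply: (do_grow Hf); [nia|nia|apply: TR6; lia].
Qed.

Lemma main_bwd : (forall w, w = x \/ w = y \/ w = z) ->
  (a, b, c, d) \in [:: (1, 1, 1, 1); (1, 1, 3, 3); (1, 2, 4, 2); (1, 3, 6, 2);
                        (1, 4, 5, 2); (1, 3, 7, 2); (1, 5, 5, 2)]%N ->
  root_system_finite R.
Proof.
move=> Hw; rewrite !inE.
case/orP => [/eqP [Ea Eb Ec Ed]|]; first by apply: (@fin_all 3) => //; rewrite Ea Eb Ec Ed; vm_compute.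
case/orP => [/eqP [Ea Eb Ec Ed]|]; first by apply: (@fin_all 6) => //; rewrite Ea Eb Ec Ed; vm_compute.
case/orP => [/eqP [Ea Eb Ec Ed]|]; first by apply: (@fin_all 6) => //; rewrite Ea Eb Ec Ed; vm_compute.
case/orP => [/eqP [Ea Eb Ec Ed]|]; first by apply: (@fin_all 12) => //; rewrite Ea Eb Ec Ed; vm_compute.
case/orP => [/eqP [Ea Eb Ec Ed]|]; first by apply: (@fin_all 12) => //; rewrite Ea Eb Ec Ed; vm_compute.
case/orP => [/eqP [Ea Eb Ec Ed]|]; first by apply: (@fin_all 18) => //; rewrite Ea Eb Ec Ed; vm_compute.
move=> /eqP [Ea Eb Ec Ed]; by apply: (@fin_all 18) => //; rewrite Ea Eb Ec Ed; vm_compute.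
Qed.

End Roots.


Unset Implicit Arguments.

Theorem theorem6p1 (A : Type) (x y z : A)
  (rho : 'I_2 -> A -> A) (C : A -> 'I_2 -> 'I_2 -> int)
  (R : A -> {ffun 'I_2 -> int} -> Prop) (a b c d : nat) :
  x <> y -> y <> z -> x <> z ->
  (forall w : A, w = x \/ w = y \/ w = z) ->
  cartan_scheme rho C ->
  rho ord0 x = y -> rho ord0 y = x -> rho ord0 z = z ->
  rho ord_max x = x -> rho ord_max y = z -> rho ord_max z = y ->
  (a <= d)%N ->
  (forall i j, C x i j = cm2 a c i j) ->
  (forall i j, C y i j = cm2 a d i j) ->
  (forall i j, C z i j = cm2 b d i j) ->
  root_system rho C R ->
  (root_system_finite R ->
     (  (a, b, c, d) = (1, 1, 1, 1)%N /\ card_is (fun v => R x v /\ nonneg v) 3 \/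
         (a, b, c, d) = (1, 1, 3, 3)%N /\ card_is (fun v => R x v /\ nonneg v) 6 \/
         (a, b, c, d) = (1, 2, 4, 2)%N /\ card_is (fun v => R x v /\ nonneg v) 6 \/
         (a, b, c, d) = (1, 3, 6, 2)%N /\ card_is (fun v => R x v /\ nonneg v) 12 \/
         (a, b, c, d) = (1, 4, 5, 2)%N /\ card_is (fun v => R x v /\ nonneg v) 12 \/
         (a, b, c, d) = (1, 3, 7, 2)%N /\ card_is (fun v => R x v /\ nonneg v) 18 \/
         (a, b, c, d) = (1, 5, 5, 2)%N /\ card_is (fun v => R x v /\ nonneg v) 18))
  /\
  ((a, b, c, d) \in [:: (1, 1, 1, 1); (1, 1, 3, 3); (1, 2, 4, 2); (1, 3, 6, 2);
                        (1, 4, 5, 2); (1, 3, 7, 2); (1, 5, 5, 2)]%N ->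
   root_system_finite R).

Proof.
move=> xy yz xz Hw CS r0x r0y r0z r1x r1y r1z had Cx Cy Cz RS; split.
- move=> Hf; exact: (main_fwd r0x r0y r0z r1x r1y r1z Cx Cy Cz RS Hf CS had xy xz).
- move=> Hin; exact: (main_bwd r0x r0y r0z r1x r1y r1z Cx Cy Cz RS Hw Hin).
Qed.
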